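(* Let $G=(V,E)$ be a finite graph of maximum degree $\Delta$ with no isolated vertices and adjacency matrix $A$. Let $b\in\{0\}\cup[1,\infty)$, $c(0)=0.109597$, $c(b)=0.0896883/b$ for $b\ge1$, and $0<\lambda<c(b)/\Delta$. Define, for $u\in V$, $D_u=d_u(1+\lambda)^b\log(1+\lambda)$, $\beta_u=\frac{1+\lambda}{\lambda}\frac{D_u}{W(D_u)(1+W(D_u))}$, $\gamma_u=\frac{1+\lambda}{\lambda}\frac{D_u}{d_u(1+W(D_u))}$, and $B=\mathrm{diag}(\boldsymbol\beta)$, $\Gamma=\mathrm{diag}(\boldsymbol\gamma)$. Then every $\mathbf x\in\mathbb R^V$ with $\mathbf x\ge\mathbf 0$ and $(B+\Gamma A)\mathbf x\ge\mathbf 1$ satisfies \[ \sum_{u\in V}x_u\ \ge\ \sum_{u\in V}\frac{1}{\beta_u+d_u\gamma_u}. \]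
   Context: $d_u$ denotes the degree of $u$; $W:(0,\infty)\to(0,\infty)$ is the principal branch of the Lambert $W$-function (inverse of $x\mapsto xe^x$). Vector inequalities are entrywise. *)

(* Defs.v *)
From HB Require Import structures.
From mathcomp Require Import all_boot all_order all_algebra.
From mathcomp Require Import all_classical all_reals.
From mathcomp Require Import all_analysis.
Set Implicit Arguments. Unset Strict Implicit. Unset Printing Implicit Defensive.
Import Order.TTheory GRing.Theory Num.Theory.
Local Open Scope classical_set_scope.
Local Open Scope ring_scope.

Definition LambertW {R : realType} (x : R) : R :=
  xget 0 [set w : R | 0 < w /\ w * expR w = x].

Definition simple_graph (n : nat) (e : rel 'I_n) : Prop :=
  (forall u v, e u v = e v u) /\ (forall u, ~~ e u u).

Definition deg (n : nat) (e : rel 'I_n) (u : 'I_n) : nat := #|[set v | e u v]|.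

Definition maxdeg (n : nat) (e : rel 'I_n) : nat := \max_(u < n) deg e u.

Definition adjmx {R : realType} (n : nat) (e : rel 'I_n) : 'M[R]_n :=
  \matrix_(i, j) (e i j)%:R.

Definition cconst {R : realType} (b : R) : R :=
  if b == 0 then 109597%:R / 1000000%:R else 896883%:R / (10000000%:R * b).

Definition Dv {R : realType} n (e : rel 'I_n) (b lam : R) (u : 'I_n) : R :=
  (deg e u)%:R * (1 + lam) `^ b * ln (1 + lam).

Definition betav {R : realType} n (e : rel 'I_n) (b lam : R) (u : 'I_n) : R :=
  (1 + lam) / lam * (Dv e b lam u /
     (LambertW (Dv e b lam u) * (1 + LambertW (Dv e b lam u)))).

Definition gammav {R : realType} n (e : rel 'I_n) (b lam : R) (u : 'I_n) : R :=
  (1 + lam) / lam * (Dv e b lam u /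
     ((deg e u)%:R * (1 + LambertW (Dv e b lam u)))).

(* Main.v *)
Require Import Defs.
From HB Require Import structures.
From mathcomp Require Import all_boot all_order all_algebra.
From mathcomp Require Import all_classical all_reals.
From mathcomp Require Import all_analysis.
Import Order.TTheory GRing.Theory Num.Theory.
Local Open Scope ring_scope.
From mathcomp Require Import ring lra.
Import numFieldNormedType.Exports.

Module Aux.
Set Implicit Arguments. Unset Strict Implicit. Unset Printing Implicit Defensive.

Section Core.
Variable R : realFieldType.
Variable n : nat.
Variable e : rel 'I_n.
Hypothesis esym : forall u v, e u v = e v u.

Definition dg (u : 'I_n) : R := (#|[set v | e u v]|)%:R.
Definition adjS (f : 'I_n -> R) u := \sum_v (e u v)%:R * f v.

Lemma dgE u : \sum_v (e u v)%:R = dg u :> R.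
Proof.
rewrite /dg -natr_sum; congr (_%:R).
rewrite (eq_bigr (fun v => if e u v then 1%N else 0%N)); last by move=> v _; case: (e u v).
by rewrite -big_mkcond /= sum1_card cardsE.
Qed.

Lemma swap2 (f : 'I_n -> 'I_n -> R) :
  \sum_u \sum_v (e u v)%:R * f u v = \sum_u \sum_v (e u v)%:R * f v u.
Proof.
rewrite exchange_big; apply: eq_bigr => u _; apply: eq_bigr => v _.
by rewrite esym.
Qed.

Lemma adj_comm (f g : 'I_n -> R) :
  \sum_u f u * adjS g u = \sum_u g u * adjS f u.
Proof.
rewrite /adjS.
transitivity (\sum_u \sum_v (e u v)%:R * (f u * g v)).
  by apply: eq_bigr => u _; rewrite mulr_sumr; apply: eq_bigr => v _; ring.
rewrite swap2; apply: eq_bigr => u _; rewrite mulr_sumr; apply: eq_bigr => v _; ring.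
Qed.

Lemma sym_L (f g : 'I_n -> R) :
  2 * \sum_u f u * (\sum_v (e u v)%:R * (g u - g v)) =
  \sum_u \sum_v (e u v)%:R * ((f u - f v) * (g u - g v)).
Proof.
have H1 : \sum_u f u * (\sum_v (e u v)%:R * (g u - g v)) =
   \sum_u \sum_v (e u v)%:R * (f u * (g u - g v)).
  by apply: eq_bigr => u _; rewrite mulr_sumr; apply: eq_bigr => v _; ring.
rewrite H1 mulr2n mulrDl mul1r.
rewrite {2}swap2 -big_split /=; apply: eq_bigr => u _.
rewrite -big_split /=; apply: eq_bigr => v _; ring.
Qed.

Lemma sum_sq_sym (f : 'I_n -> R) :
  \sum_u \sum_v (e u v)%:R * (f v ^+ 2) = \sum_u dg u * f u ^+ 2.
Proof.
rewrite swap2; apply: eq_bigr => u _; rewrite -dgE mulr_suml.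
by apply: eq_bigr.
Qed.


Lemma sum_sq_self (f : 'I_n -> R) :
  \sum_u \sum_v (e u v)%:R * (f u ^+ 2) = \sum_u dg u * f u ^+ 2.
Proof.
apply: eq_bigr => u _; rewrite -dgE mulr_suml.
by apply: eq_bigr.
Qed.

Lemma cross_sum (f : 'I_n -> R) :
  \sum_u \sum_v (e u v)%:R * (f u * f v) = \sum_u f u * adjS f u.
Proof.
apply: eq_bigr => u _; rewrite /adjS mulr_sumr; apply: eq_bigr => v _; ring.
Qed.

Lemma sq_plus (f : 'I_n -> R) :
  \sum_u \sum_v (e u v)%:R * ((f u + f v) ^+ 2) =
  2 * \sum_u dg u * f u ^+ 2 + 2 * \sum_u f u * adjS f u.
Proof.
transitivity (\sum_u \sum_v (e u v)%:R * (f u ^+ 2) +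
   (2 * \sum_u \sum_v (e u v)%:R * (f u * f v) +
   \sum_u \sum_v (e u v)%:R * (f v ^+ 2))).
  rewrite mulr_sumr -!big_split /=; apply: eq_bigr => u _.
  rewrite mulr_sumr -!big_split /=; apply: eq_bigr => v _; ring.
rewrite sum_sq_self sum_sq_sym cross_sum; ring.
Qed.

Lemma sq_minus (f : 'I_n -> R) :
  \sum_u \sum_v (e u v)%:R * ((f u - f v) ^+ 2) =
  2 * \sum_u dg u * f u ^+ 2 - 2 * \sum_u f u * adjS f u.
Proof.
transitivity (\sum_u \sum_v (e u v)%:R * (f u ^+ 2) -
   (2 * \sum_u \sum_v (e u v)%:R * (f u * f v) -
   \sum_u \sum_v (e u v)%:R * (f v ^+ 2))).
  rewrite mulr_sumr -!sumrB; apply: eq_bigr => u _.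
  rewrite mulr_sumr -!sumrB /=; apply: eq_bigr => v _; ring.
rewrite sum_sq_self sum_sq_sym cross_sum; ring.
Qed.

Lemma nonneg_dsum (F : 'I_n -> 'I_n -> R) :
  (forall u v, 0 <= F u v) -> 0 <= \sum_u \sum_v (e u v)%:R * F u v.
Proof.
move=> H; apply: sumr_ge0 => u _; apply: sumr_ge0 => v _.
by apply: mulr_ge0 => //; rewrite ler0n.
Qed.

Lemma le_dsum (F G : 'I_n -> 'I_n -> R) :
  (forall u v, F u v <= G u v) ->
  \sum_u \sum_v (e u v)%:R * F u v <= \sum_u \sum_v (e u v)%:R * G u v.
Proof.
move=> H; apply: ler_sum => u _; apply: ler_sum => v _.
by apply: ler_wpM2l => //; rewrite ler0n.
Qed.

End Core.

Section Core2.
Variable R : realFieldType.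
Variable n : nat.
Variable e : rel 'I_n.
Hypothesis esym : forall u v, e u v = e v u.
Local Notation dg := (@dg R n e).
Local Notation adjS := (@adjS R n e).
Variable p : 'I_n -> R.
Variable D : R.
Hypothesis p_gt0 : forall u, 0 < p u.
Hypothesis D_gt0 : 0 < D.
Hypothesis dg_le : forall u, dg u <= D.
Hypothesis kap : forall u, dg u + 3 * D <= (p u)^-1.

Lemma QL (f : 'I_n -> R) :
  3 * D * \sum_u f u ^+ 2 <= \sum_u f u * (f u / p u + adjS f u).
Proof.
have H1 : \sum_u f u * (f u / p u + adjS f u) =
   \sum_u f u ^+ 2 * (p u)^-1 + \sum_u f u * adjS f u.
  by rewrite -big_split /=; apply: eq_bigr => u _; ring.
have H2 := sq_plus esym f.
have H3 : 0 <= \sum_u \sum_v (e u v)%:R * ((f u + f v) ^+ 2).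
  by apply: nonneg_dsum => u v; apply: sqr_ge0.
have H4 : \sum_u (dg u + 3 * D) * f u ^+ 2 <= \sum_u f u ^+ 2 * (p u)^-1.
  apply: ler_sum => u _; rewrite mulrC; apply: ler_wpM2l; [exact: sqr_ge0|exact: kap].
have H5 : \sum_u (dg u + 3 * D) * f u ^+ 2 = \sum_u dg u * f u ^+ 2 + 3 * D * \sum_u f u ^+ 2.
  rewrite mulr_sumr -big_split /=; apply: eq_bigr => u _; ring.
rewrite H1; lra.
Qed.


Definition Km : 'M[R]_n := \matrix_(i, j) ((i == j)%:R / p i + (e i j)%:R).

Lemma Km_entry (v : 'rV[R]_n) j :
  (v *m Km) 0 j = v 0 j / p j + adjS (fun i => v 0 i) j.
Proof.
rewrite !mxE /adjS.
rewrite (eq_bigr (fun i => v 0 i * ((i == j)%:R / p i) + (e j i)%:R * v 0 i)); last first.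
  by move=> i _; rewrite mxE (esym i j); ring.
rewrite big_split /=; congr (_ + _).
rewrite (bigD1 j) //= eqxx big1 ?addr0; first by rewrite mul1r.
by move=> i /negbTE ->; rewrite mul0r mulr0.
Qed.

Lemma sum_sq_eq0 (f : 'I_n -> R) : \sum_u f u ^+ 2 <= 0 -> forall u, f u = 0.
Proof.
move=> H u.
have H0 : \sum_u f u ^+ 2 = 0.
  by apply/eqP; rewrite eq_le H /=; apply: sumr_ge0 => i _; apply: sqr_ge0.
have := @psumr_eq0P _ _ xpredT (fun i => f i ^+ 2) (fun i _ => sqr_ge0 (f i)) H0 u isT.
by move/eqP; rewrite sqrf_eq0 => /eqP.
Qed.

Lemma Km_unit : Km \in unitmx.
Proof.
rewrite unitmxE unitfE; apply/negP => /det0P [v vn0 vK].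
have Hj : forall j, v 0 j / p j + adjS (fun i => v 0 i) j = 0.
  by move=> j; rewrite -Km_entry vK mxE.
have E0 : \sum_u v 0 u * (v 0 u / p u + adjS (fun i => v 0 i) u) = 0.
  by rewrite big1 // => u _; rewrite Hj mulr0.
have := QL (fun i => v 0 i); rewrite E0 => H.
have H' : \sum_u v 0 u ^+ 2 <= 0.
  have HD : 0 < 3 * D by apply: mulr_gt0.
  rewrite -(pmulr_rle0 _ HD); exact: H.

move/negP: vn0; apply; apply/eqP/rowP => j; rewrite mxE.
exact: (sum_sq_eq0 H').
Qed.

Lemma exists_sol : exists mm : 'I_n -> R, forall u, mm u / p u + adjS mm u = 1.
Proof.
set w := (const_mx 1 : 'rV[R]_n) *m invmx Km.
exists (fun j => w 0 j) => u.
have := mulmxKV Km_unit (const_mx 1 : 'rV[R]_n).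
rewrite -/w => Hw.
by rewrite -Km_entry Hw mxE.
Qed.


Lemma adj_lb (f : 'I_n -> R) c u : (forall v, c <= f v) -> dg u * c <= adjS f u.
Proof.
move=> H; rewrite -dgE mulr_suml; apply: ler_sum => v _.
by apply: ler_wpM2l => //; rewrite ler0n.
Qed.

Lemma adj_ub (f : 'I_n -> R) c u : (forall v, f v <= c) -> adjS f u <= dg u * c.
Proof.
move=> H; rewrite -dgE mulr_suml; apply: ler_sum => v _.
by apply: ler_wpM2l => //; rewrite ler0n.
Qed.

Lemma dg_ge0 u : 0 <= dg u.
Proof. by rewrite /dg ler0n. Qed.

Lemma mm_ge0 (mm : 'I_n -> R) :
  (forall u, mm u / p u + adjS mm u = 1) -> forall u, 0 <= mm u.
Proof.
move=> Hm u.
have eqm : forall i, mm i = p i * (1 - adjS mm i).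
  move=> i; have := Hm i; have := p_gt0 i => hp H.
  by rewrite -H addrK mulrC divfK // gt_eqF.
have pD : forall i, 3 * D * p i <= 1.
  move=> i; have := kap i; have := dg_ge0 i; have := p_gt0 i => hp h0 hk.
  have h1 : 3 * D <= (p i)^-1 by lra.
  have hne : p i != 0 by rewrite gt_eqF.
  by apply: (le_trans (ler_wpM2r (ltW hp) h1)); rewrite mulVf.
have [u0 _ Hmin] := @arg_minP _ _ _ u predT mm isT.
have [u1 _ Hmax] := @arg_maxP _ _ _ u predT mm isT.
set mu := mm _ in Hmin; set M := mm _ in Hmax.
rewrite leNgt; apply/negP => Hneg.
have mun : mu < 0 by apply: le_lt_trans (Hmin u isT) Hneg.
have hp0 := p_gt0 u0; have hp1 := p_gt0 u1.
have hlb : D * mu <= adjS mm u1.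
  apply: le_trans (adj_lb u1 (fun v => Hmin v isT)).
  have := dg_le u1; have := dg_ge0 u1; nra.
have hM : M <= p u1 * (1 - D * mu).
  rewrite /M (eqm u1); apply: ler_wpM2l; [exact: ltW|lra].
have hmu := eqm u0; rewrite -/mu in hmu.
case: (ltP M 0) => HM.
  have : adjS mm u0 <= dg u0 * M by apply: adj_ub => v; apply: Hmax.
  have := dg_ge0 u0 => h0 h1.
  have h2 : adjS mm u0 <= 0 by nra.
  have h3 : 0 <= p u0 * - adjS mm u0 by apply: mulr_ge0; lra.
  lra.
have hub : adjS mm u0 <= D * M.
  apply: le_trans (adj_ub u0 (fun v => Hmax v isT)) _.
  have := dg_le u0; nra.
have hDM : 3 * (D * M) <= 1 - D * mu.
  have := pD u1; nra.
have := pD u0; nra.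
Qed.


Definition DS (F : 'I_n -> 'I_n -> R) := \sum_u \sum_v (e u v)%:R * F u v.

Lemma DS_add F G : DS (fun u v => F u v + G u v) = DS F + DS G.
Proof.
rewrite /DS -big_split /=; apply: eq_bigr => u _.
rewrite -big_split /=; apply: eq_bigr => v _; ring.
Qed.

Lemma DS_scale a F : DS (fun u v => a * F u v) = a * DS F.
Proof.
rewrite /DS mulr_sumr; apply: eq_bigr => u _.
rewrite mulr_sumr; apply: eq_bigr => v _; ring.
Qed.

Lemma DS_le F G : (forall u v, F u v <= G u v) -> DS F <= DS G.
Proof. exact: le_dsum. Qed.

Definition Lf (f : 'I_n -> R) u := \sum_v (e u v)%:R * (f u - f v).

Lemma Lf_eq f u : Lf f u = dg u * f u - adjS f u.
Proof.
rewrite /Lf /adjS -dgE mulr_suml -sumrB; apply: eq_bigr => v _; ring.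
Qed.

Lemma adjSB f g u : adjS (fun w => f w - g w) u = adjS f u - adjS g u.
Proof. rewrite /adjS -sumrB; apply: eq_bigr => v _; ring. Qed.

Definition hh w := p w / (1 + dg w * p w).

Hypothesis pairH : forall u v,
  (p u - p v) ^+ 2 <= (p u - p v) * (hh u - hh v) /\ (hh u - hh v) ^+ 2 <= 2 * ((p u - p v) * (hh u - hh v)).

Lemma core_main (x : 'I_n -> R) :
  (forall u, 0 <= x u) ->
  (forall u, 1 + dg u * p u <= x u / p u + adjS x u) ->
  \sum_u p u <= \sum_u x u.
Proof.
move=> x0 Hx.
have [mm Hm] := exists_sol.
have mm0 := mm_ge0 Hm.
set c := fun u => 1 + dg u * p u.
have c_gt0 : forall u, 0 < c u.
  move=> u; rewrite /c; have := dg_ge0 u; have := p_gt0 u; nra.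
have S3 : \sum_u mm u * c u <= \sum_u x u.
  have -> : \sum_u x u = \sum_u mm u * (x u / p u + adjS x u).
    transitivity (\sum_u x u * (mm u / p u + adjS mm u)).
      by apply: eq_bigr => u _; rewrite Hm mulr1.
    have E1 : \sum_u x u * (mm u / p u + adjS mm u) =
       \sum_u x u * mm u / p u + \sum_u x u * adjS mm u.
      by rewrite -big_split /=; apply: eq_bigr => u _; ring.
    have E2 : \sum_u mm u * (x u / p u + adjS x u) =
       \sum_u x u * mm u / p u + \sum_u mm u * adjS x u.
      by rewrite -big_split /=; apply: eq_bigr => u _; ring.
    by rewrite E1 E2 adj_comm.
  by apply: ler_sum => u _; apply: ler_wpM2l; [exact: mm0|exact: Hx].
set nu := fun u => mm u - hh u.
have hhc : forall u, hh u * c u = p u.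
  by move=> u; rewrite /hh /c mulrC mulrC divfK // gt_eqF // c_gt0.
have IdA : forall u, nu u / p u + adjS nu u = Lf hh u.
  move=> u; rewrite Lf_eq /nu adjSB.
  have H := Hm u.
  have hp := p_gt0 u; have hc := c_gt0 u.
  have E : 1 - hh u / p u = dg u * hh u.
    rewrite /hh -/(c u); have -> : 1 = c u / c u by rewrite divff // gt_eqF.
    by rewrite {1}/c; field; rewrite !gt_eqF.
  rewrite -E -H; ring.
have Sc : \sum_u mm u * c u = \sum_u p u + \sum_u nu u * c u.
  transitivity (\sum_u (hh u * c u + nu u * c u)).
    by apply: eq_bigr => u _; rewrite /nu; ring.
  by rewrite big_split /=; congr (_ + _); apply: eq_bigr => u _; apply: hhc.
have cdec : forall u, c u = 1 + adjS p u + Lf p u.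
  by move=> u; rewrite Lf_eq /c; ring.
have T1 : \sum_u nu u * c u =
   \sum_u nu u + \sum_u nu u * adjS p u + \sum_u nu u * Lf p u.
  rewrite -!big_split /=; apply: eq_bigr => u _; rewrite cdec; ring.
have T2 : \sum_u p u * Lf hh u = \sum_u nu u + \sum_u p u * adjS nu u.
  rewrite -big_split /=; apply: eq_bigr => u _; rewrite -IdA.
  have hp := p_gt0 u; rewrite mulrDr; congr (_ + _).
  by rewrite mulrC divfK // gt_eqF.
have Snu : \sum_u nu u * c u = \sum_u p u * Lf hh u + \sum_u nu u * Lf p u.
  by rewrite T1 T2 adj_comm.
set S := \sum_u nu u ^+ 2.
set Q := \sum_u nu u * (nu u / p u + adjS nu u).
have HQ : 3 * D * S <= Q := QL nu.
have HZ : DS (fun u v => (nu u - nu v) * (hh u - hh v)) = 2 * Q.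
  rewrite /DS -sym_L //; congr (_ * _); apply: eq_bigr => u _; by rewrite IdA.
have HEe : DS (fun u v => (p u - p v) * (hh u - hh v)) = 2 * \sum_u p u * Lf hh u.
  by rewrite /DS -sym_L.
have HY : DS (fun u v => (nu u - nu v) * (p u - p v)) = 2 * \sum_u nu u * Lf p u.
  by rewrite /DS -sym_L.
have HX : DS (fun u v => (nu u - nu v) ^+ 2) =
   2 * \sum_u dg u * nu u ^+ 2 - 2 * \sum_u nu u * adjS nu u.
  by rewrite /DS sq_minus.
have Hplus : 0 <= 2 * \sum_u dg u * nu u ^+ 2 + 2 * \sum_u nu u * adjS nu u.
  rewrite -sq_plus //; apply: nonneg_dsum => u v; apply: sqr_ge0.
have HdS : \sum_u dg u * nu u ^+ 2 <= D * S.
  rewrite /S mulr_sumr; apply: ler_sum => u _; apply: ler_wpM2r; [exact: sqr_ge0|exact: dg_le].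
have H3Z : DS (fun u v => 3 * ((nu u - nu v) * (hh u - hh v))) <=
    DS (fun u v => 9 / 4 * (nu u - nu v) ^+ 2 + (hh u - hh v) ^+ 2).
  apply: DS_le => u v; have := sqr_ge0 (3 / 2 * (nu u - nu v) - (hh u - hh v)); nra.
have H3Y : DS (fun u v => - 1 * (9 / 4 * (nu u - nu v) ^+ 2 + (p u - p v) ^+ 2)) <=
    DS (fun u v => 3 * ((nu u - nu v) * (p u - p v))).
  apply: DS_le => u v; have := sqr_ge0 (3 / 2 * (nu u - nu v) + (p u - p v)); nra.
have HH : DS (fun u v => (hh u - hh v) ^+ 2) <= DS (fun u v => 2 * ((p u - p v) * (hh u - hh v))).
  by apply: DS_le => u v; have [_ H2] := pairH u v.
have HP : DS (fun u v => (p u - p v) ^+ 2) <= DS (fun u v => (p u - p v) * (hh u - hh v)).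
  by apply: DS_le => u v; have [H1 _] := pairH u v.
rewrite !DS_scale !DS_add !DS_scale in H3Z H3Y HH.
have HDS0 : 0 <= D * S.
  by apply: mulr_ge0; [exact: ltW|apply: sumr_ge0 => u _; apply: sqr_ge0].
set DSv := D * S in HdS HDS0.
have HQ' : 3 * DSv <= Q by rewrite /DSv mulrA.
lra.
Qed.

End Core2.

Section Pair.
Variable R : realType.

Lemma inv_spec (t : R) : 0 < t -> (1 + t)^-1 * (1 + t) = 1 /\ 0 < (1 + t)^-1.
Proof.
move=> t0; have h : 0 < 1 + t by lra.
split; [by rewrite mulVf // gt_eqF | by rewrite invr_gt0].
Qed.

Lemma key1 (t1 t2 q i1 i2 : R) : 0 < t1 -> t1 <= t2 -> t2 <= 1/4 ->
  1 - (t2 - t1) <= q -> 0 <= q ->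
  i1 * (1 + t1) = 1 -> 0 < i1 -> i2 * (1 + t2) = 1 -> 0 < i2 ->
  t1 * i1 <= q * t2 * i2.
Proof.
move=> h1 h2 h3 hq hq0 e1 p1 e2 p2.
have E1 : t1 * i1 = (t1 * (1 + t2)) * (i1 * i2).
  by transitivity (t1 * i1 * (i2 * (1 + t2))); [rewrite e2 mulr1 | ring].
have E2 : q * t2 * i2 = (q * t2 * (1 + t1)) * (i1 * i2).
  by transitivity (q * t2 * i2 * (i1 * (1 + t1))); [rewrite e1 mulr1 | ring].
rewrite E1 E2; apply: ler_wpM2r; first by apply: mulr_ge0; lra.
have a1 : 0 <= (q - (1 - (t2 - t1))) * (t2 * (1 + t1)).
  by apply: mulr_ge0; [lra | apply: mulr_ge0; lra].
have a2 : 0 <= (t2 - t1) * (1 - t2 - t1 * t2).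
  apply: mulr_ge0; first lra.
  have : t1 * t2 <= 1/4 * 1 by apply: ler_pM; lra.
  lra.
lra.
Qed.

Lemma key2 (t1 t2 q i1 i2 : R) : 0 < t1 -> t1 <= t2 -> t2 <= 1/4 ->
  q * (1 + (t2 - t1)) <= 1 -> 0 <= q ->
  i1 * (1 + t1) = 1 -> 0 < i1 -> i2 * (1 + t2) = 1 -> 0 < i2 ->
  q * (2 - i2) <= 2 - i1.
Proof.
move=> h1 h2 h3 hq hq0 e1 p1 e2 p2.
have E1 : 2 - i1 = ((1 + 2 * t1) * (1 + t2)) * (i1 * i2).
  have -> : 2 - i1 = (1 + 2 * t1) * i1.
    by transitivity (2 * (i1 * (1 + t1)) - i1); [rewrite e1 mulr1 | ring].
  by transitivity ((1 + 2 * t1) * i1 * (i2 * (1 + t2))); [rewrite e2 mulr1 | ring].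
have E2 : q * (2 - i2) = (q * (1 + 2 * t2) * (1 + t1)) * (i1 * i2).
  have -> : 2 - i2 = (1 + 2 * t2) * i2.
    by transitivity (2 * (i2 * (1 + t2)) - i2); [rewrite e2 mulr1 | ring].
  by transitivity (q * ((1 + 2 * t2) * i2) * (i1 * (1 + t1))); [rewrite e1 mulr1 | ring].
rewrite E1 E2; apply: ler_wpM2r; first by apply: mulr_ge0; lra.
have a0 : 0 <= (1 + 2 * t1) * (1 + (t1 + (t2 - t1))) - 1.
  have : 0 <= t1 * t2 by apply: mulr_ge0; lra.
  lra.
have a1 : 0 <= q * ((t2 - t1) * ((1 + 2 * t1) * (1 + (t1 + (t2 - t1))) - 1)).
  by apply: mulr_ge0 => //; apply: mulr_ge0; lra.
have a2 : 0 <= (1 - q * (1 + (t2 - t1))) * ((1 + 2 * t1) * (1 + t2)).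
  by apply: mulr_ge0; [lra | apply: mulr_ge0; lra].
lra.
Qed.

Definition PP (a t : R) := a * expR (- t).
Definition HH (a t : R) := a * expR (- t) / (1 + t).

Lemma pair_le (a t1 t2 : R) : 0 < a -> 0 < t1 -> t1 <= t2 -> t2 <= 1/4 ->
  (PP a t1 - PP a t2) ^+ 2 <= (PP a t1 - PP a t2) * (HH a t1 - HH a t2) /\
  (HH a t1 - HH a t2) ^+ 2 <= 2 * ((PP a t1 - PP a t2) * (HH a t1 - HH a t2)).
Proof.
move=> a0 h1 h2 h3.
set f := expR (- t1); set q := expR (- (t2 - t1)).
have ef : expR (- t2) = f * q by rewrite /f /q -expRD; congr expR; ring.
have f0 : 0 < f by apply: expR_gt0.
have q0 : 0 <= q by apply: expR_ge0.
have q1 : 1 - (t2 - t1) <= q by rewrite /q; have := expR_ge1Dx (- (t2 - t1)); lra.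
have q2 : q * (1 + (t2 - t1)) <= 1.
  have H := expR_ge1Dx (t2 - t1).
  have H' : q * expR (t2 - t1) = 1 by rewrite /q -expRD addNr expR0.
  have : q * (1 + (t2 - t1)) <= q * expR (t2 - t1) by apply: ler_wpM2l.
  lra.
have q3 : q <= 1 by have := q2; nra.
have [e1 p1] := inv_spec h1.
have t20 : 0 < t2 by lra.
have [e2 p2] := inv_spec t20.
set i1 := (1 + t1)^-1 in e1 p1; set i2 := (1 + t2)^-1 in e2 p2.
have HP : PP a t1 - PP a t2 = a * f * (1 - q) by rewrite /PP ef -/f; ring.
have HH1 : HH a t1 - HH a t2 = a * f * (i1 - q * i2) by rewrite /HH ef -/f /i1 /i2; ring.
have HX : 0 <= PP a t1 - PP a t2.
  by rewrite HP; apply: mulr_ge0; [apply: mulr_ge0; lra | lra].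
have HYX : 0 <= (HH a t1 - HH a t2) - (PP a t1 - PP a t2).
  rewrite HP HH1.
  have -> : a * f * (i1 - q * i2) - a * f * (1 - q) =
     a * f * (q * t2 * i2 - t1 * i1).
    have E : i1 = 1 - t1 * i1.
      by transitivity (i1 * (1 + t1) - t1 * i1); [ring | rewrite e1].
    have E' : i2 = 1 - t2 * i2.
      by transitivity (i2 * (1 + t2) - t2 * i2); [ring | rewrite e2].
    rewrite {1}E {1}E'; ring.
  apply: mulr_ge0; first (apply: mulr_ge0; lra).
  by have := key1 h1 h2 h3 q1 q0 e1 p1 e2 p2; lra.
have H2XY : 0 <= 2 * (PP a t1 - PP a t2) - (HH a t1 - HH a t2).
  rewrite HP HH1.
  have -> : 2 * (a * f * (1 - q)) - a * f * (i1 - q * i2) =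
     a * f * ((2 - i1) - q * (2 - i2)) by ring.
  apply: mulr_ge0; first (apply: mulr_ge0; lra).
  by have := key2 h1 h2 h3 q2 q0 e1 p1 e2 p2; lra.
set X := PP a t1 - PP a t2 in HX HYX H2XY *.
set Y := HH a t1 - HH a t2 in HYX H2XY *.
have m1 := mulr_ge0 HX HYX.
have HY : 0 <= Y by lra.
have m2 := mulr_ge0 HY H2XY.
split; nra.
Qed.

Lemma pair_all (a t1 t2 : R) : 0 < a -> 0 < t1 <= 1/4 -> 0 < t2 <= 1/4 ->
  (PP a t1 - PP a t2) ^+ 2 <= (PP a t1 - PP a t2) * (HH a t1 - HH a t2) /\
  (HH a t1 - HH a t2) ^+ 2 <= 2 * ((PP a t1 - PP a t2) * (HH a t1 - HH a t2)).
Proof.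
move=> a0 /andP[h1 h1'] /andP[h2 h2'].
case: (leP t1 t2) => ht; first exact: pair_le.
have := pair_le a0 h2 (ltW ht) h1'.
have -> : (PP a t2 - PP a t1) ^+ 2 = (PP a t1 - PP a t2) ^+ 2 by ring.
have -> : (HH a t2 - HH a t1) ^+ 2 = (HH a t1 - HH a t2) ^+ 2 by ring.
have -> : (PP a t2 - PP a t1) * (HH a t2 - HH a t1) =
   (PP a t1 - PP a t2) * (HH a t1 - HH a t2) by ring.
done.
Qed.

End Pair.

Local Open Scope classical_set_scope.
Local Open Scope ring_scope.

Lemma lambert_ex (R : realType) (x : R) : 0 < x -> exists w : R, 0 < w /\ w * expR w = x.
Proof.
move=> x0.
have cont : continuous (fun t : R => t * expR t).
  move=> t; apply: cvgM; [exact: cvg_id|exact: continuous_expR].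
have [c cin fc] : exists2 c, c \in `[0, x] & c * expR c = x.
  apply: IVT; first exact: ltW.
    by apply: continuous_subspaceT.
  rewrite mul0r.
  have h1 : x <= x * expR x.
    by rewrite -{1}(mulr1 x) ler_pM2l // -expR0 ler_expR ltW.
  by rewrite ge_min le_max (ltW x0) h1 orbT.
move: cin; rewrite in_itv /= => /andP[c0 cx].
exists c; split=> //.
rewrite lt_neqAle c0 andbT; apply/negP => /eqP c00.
by move: fc; rewrite -c00 mul0r => /eqP; rewrite eq_sym gt_eqF.
Qed.

Lemma lambertP (R : realType) (x : R) : 0 < x ->
  0 < LambertW x /\ LambertW x * expR (LambertW x) = x.
Proof.
move=> x0; rewrite /LambertW.
have H := @xgetPex R 0 [set w : R | 0 < w /\ w * expR w = x] (@lambert_ex R x x0).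
exact: H.
Qed.

Local Close Scope classical_set_scope.

Lemma aD_bound (R : realType) (b lam D : R) : (b = 0 \/ 1 <= b) -> 0 < lam -> 1 <= D ->
  lam < cconst b / D -> (1 + lam) `^ b * ln (1 + lam) * D <= 1/4.
Proof.
move=> Hb l0 D1 Hl.
have D0 : 0 < D by lra.
have hlD : lam * D < cconst b by rewrite -ltr_pdivlMr.
have hln : ln (1 + lam) <= lam.
  have h := expR_ge1Dx lam.
  rewrite -ler_expR lnK //; rewrite posrE; lra.
have hln0 : 0 < ln (1 + lam) by apply: ln_gt0; lra.
case: Hb => [b0|b1].
  rewrite b0 powRr0 mul1r; move: hlD; rewrite b0 /cconst eqxx => hlD.
  have : ln (1 + lam) * D <= lam * D by apply: ler_wpM2r; lra.
  lra.
have bn0 : b != 0 by apply/eqP => b0; rewrite b0 in b1; lra.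
move: hlD; rewrite /cconst (negbTE bn0) => hlD.
have b0 : 0 < b by lra.
have hlDb : lam * D * b < 896883%:R / 10000000%:R.
  have : lam * D * b < 896883%:R / (10000000%:R * b) * b by rewrite ltr_pM2r.
  have -> : 896883%:R / (10000000%:R * b) * b = 896883%:R / 10000000%:R :> R.
    by field.
  done.
have hpow : (1 + lam) `^ b = expR (b * ln (1 + lam)).
  by rewrite /powR gt_eqF //; lra.
set E := expR (b * lam).
have hE1 : (1 + lam) `^ b <= E by rewrite hpow ler_expR; apply: ler_wpM2l; lra.
have hbl : b * lam <= 896883%:R / 10000000%:R.
  have h3 : 0 <= (b * lam) * (D - 1) by apply: mulr_ge0; [apply: mulr_ge0; lra | lra].
  have : b * lam <= lam * D * b.
    have -> : lam * D * b = b * lam + (b * lam) * (D - 1) by ring.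
    lra.
  lra.
have hE : E * (1 - b * lam) <= 1.
  have h1 := expR_ge1Dx (- (b * lam)).
  have h2 : E * expR (- (b * lam)) = 1 by rewrite /E -expRD subrr expR0.
  have : E * (1 - b * lam) <= E * expR (- (b * lam)).
    by apply: ler_wpM2l; [exact: expR_ge0| lra].
  lra.
have E0 : 0 < E := expR_gt0 _.
have hE' : E <= 11 / 10 by nra.
have hp0 : 0 <= (1 + lam) `^ b := powR_ge0 _ _.
have : (1 + lam) `^ b * ln (1 + lam) * D <= E * lam * D.
  apply: ler_wpM2r; first lra.
  by apply: ler_pM => //; lra.
have : E * (lam * D) <= 11/10 * (lam * D) by apply: ler_wpM2r; nra.
have : lam * D <= lam * D * b.
  have h3 : 0 <= (lam * D) * (b - 1) by apply: mulr_ge0; [apply: mulr_ge0; lra | lra].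
  have -> : lam * D * b = lam * D + (lam * D) * (b - 1) by ring.
  lra.
have -> : E * lam * D = E * (lam * D) by ring.
lra.
Qed.

End Aux.
Import Aux.

Theorem mainTheorem8 (R : realType) (n : nat) (e : rel 'I_n)
  (Hg : simple_graph e) (Hiso : forall u, (0 < deg e u)%N)
  (b lam : R) (Hb : b = 0 \/ 1 <= b)
  (Hlam0 : 0 < lam) (Hlam1 : lam < cconst b / (maxdeg e)%:R)
  (x : 'cV[R]_n) (Hx0 : forall i, 0 <= x i 0)
  (Hx1 : forall i,
     1 <= ((diag_mx (\row_u betav e b lam u)
            + diag_mx (\row_u gammav e b lam u) *m adjmx e) *m x) i 0) :
  \sum_(u < n) 1 / (betav e b lam u + (deg e u)%:R * gammav e b lam u)
    <= \sum_(u < n) x u 0.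
Proof.
case: (posnP n) => [n0|npos].
  by rewrite !big1 // => -[i hi]; exfalso; move: hi; rewrite n0.
have esym : forall u v, e u v = e v u by case: Hg.
set u0 : 'I_n := Ordinal npos.
set a := (1 + lam) `^ b * ln (1 + lam).
set K := (1 + lam) / lam.
set D := (maxdeg e)%:R : R.
have dD : forall u, (deg e u)%:R <= D.
  by move=> u; rewrite /D ler_nat /maxdeg; exact: leq_bigmax.
have d1 : forall u, 1 <= (deg e u)%:R :> R by move=> u; rewrite ler1n.
have D1 : 1 <= D by apply: le_trans (d1 u0) (dD u0).
have haD : a * D <= 1/4 by apply: aD_bound.
have hln0 : 0 < ln (1 + lam) by apply: ln_gt0; lra.
have a0 : 0 < a by apply: mulr_gt0 => //; apply: powR_gt0; lra.
have K0 : 0 < K by apply: divr_gt0; lra.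
have hDv : forall u, Dv e b lam u = (deg e u)%:R * a by move=> u; rewrite /Dv /a mulrA.
set w := fun u => LambertW (Dv e b lam u).
have wP : forall u, 0 < w u /\ w u * expR (w u) = (deg e u)%:R * a.
  move=> u; rewrite /w hDv; apply: lambertP; apply: mulr_gt0 => //; have := d1 u; lra.
set p := fun u => w u / (deg e u)%:R.
have d0 : forall u, 0 < (deg e u)%:R :> R by move=> u; have := d1 u; lra.
have wle : forall u, w u <= a * D.
  move=> u; have [w0 we] := wP u; have := expR_ge1Dx (w u) => h.
  have : w u * 1 <= w u * expR (w u) by apply: ler_wpM2l; lra.
  rewrite we mulr1 => h2.
  have : (deg e u)%:R * a <= D * a by apply: ler_wpM2r; [lra | exact: dD].
  lra.
have p_gt0 : forall u, 0 < p u by move=> u; apply: divr_gt0; [case: (wP u) | exact: d0].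
have D_gt0 : 0 < D by lra.
have dp : forall u, (deg e u)%:R * p u = w u.
  by move=> u; rewrite /p mulrC divfK // gt_eqF.
have pE : forall u, p u = PP a (w u).
  move=> u; have [w0 we] := wP u; rewrite /PP /p.
  have h : expR (w u) * expR (- w u) = 1 by rewrite -expRD subrr expR0.
  have hd := d0 u.
  apply: (@mulIf _ ((deg e u)%:R * expR (w u))).
    by rewrite mulf_neq0 // gt_eqF // expR_gt0.
  rewrite mulrA divfK ?gt_eqF // we.
  have -> : a * expR (- w u) * ((deg e u)%:R * expR (w u)) =
     (deg e u)%:R * a * (expR (w u) * expR (- w u)) by ring.
  by rewrite h mulr1.
have dgD : forall u, dg R e u = (deg e u)%:R.
  move=> u; rewrite /dg /deg; congr (_%:R); apply: eq_card => v.
  rewrite inE /=; apply/idP/idP => H.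
    by rewrite inE.
  by move: H; rewrite inE.
have hhE : forall u, hh e p u = HH a (w u).
  move=> u; rewrite /hh /HH.
  rewrite dgD.
  by rewrite dp pE.
have dg_le : forall u, dg R e u <= D by move=> u; rewrite dgD; exact: dD.
have kap : forall u, dg R e u + 3 * D <= (p u)^-1.
  move=> u; rewrite dgD.
  have [w0 we] := wP u; have hE := expR_ge1Dx (w u).
  have hd := dD u.
  have h1 : a * ((deg e u)%:R + 3 * D) <= expR (w u).
    have : a * (deg e u)%:R <= a * D by apply: ler_wpM2l; lra.
    lra.
  have h2 : w u * (a * ((deg e u)%:R + 3 * D)) <= w u * expR (w u).
    by apply: ler_wpM2l; lra.
  rewrite we in h2.
  have h3 : ((deg e u)%:R + 3 * D) * w u <= (deg e u)%:R.
    have : a * (((deg e u)%:R + 3 * D) * w u) <= a * (deg e u)%:R.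
      have -> : a * (((deg e u)%:R + 3 * D) * w u) = w u * (a * ((deg e u)%:R + 3 * D)) by ring.
      by have -> : a * (deg e u)%:R = (deg e u)%:R * a by ring.
    by rewrite ler_pM2l.
  by rewrite /p invf_div ler_pdivlMr.
have pairH : forall u v,
  (p u - p v) ^+ 2 <= (p u - p v) * (hh e p u - hh e p v) /\ (hh e p u - hh e p v) ^+ 2 <= 2 * ((p u - p v) * (hh e p u - hh e p v)).
  move=> u v; rewrite !hhE !pE; apply: pair_all => //.
    by case: (wP u) => w0 _; rewrite w0 /=; have := wle u; lra.
  by case: (wP v) => w0 _; rewrite w0 /=; have := wle v; lra.
have entry : forall u, ((diag_mx (\row_u betav e b lam u)
            + diag_mx (\row_u gammav e b lam u) *m adjmx e) *m x) u 0 =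
    betav e b lam u * x u 0 + gammav e b lam u * \sum_j (e u j)%:R * x j 0.
  move=> u; rewrite mulmxDl -mulmxA !mul_diag_mx !mxE; congr (_ + _).
  by congr (_ * _); apply: eq_bigr => j _; rewrite mxE.
have hbeta : forall u, betav e b lam u = K * ((deg e u)%:R * a / (w u * (1 + w u))).
  by move=> u; rewrite /betav {1}hDv.
have hgamma : forall u, gammav e b lam u = K * ((deg e u)%:R * a / ((deg e u)%:R * (1 + w u))).
  by move=> u; rewrite /gammav {1}hDv.
set xt := fun u => a * K * x u 0.
have xt0 : forall u, 0 <= xt u.
  by move=> u; apply: mulr_ge0; [apply: mulr_ge0; lra | exact: Hx0].
have Hxt : forall u, 1 + dg R e u * p u <= xt u / p u + @adjS R n e xt u.
  move=> u; rewrite dgD dp.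
  have H := Hx1 u; rewrite entry hbeta hgamma in H.
  have [w0 _] := wP u; have hd := d0 u.
  have hadj : @adjS R n e xt u = a * K * \sum_j (e u j)%:R * x j 0.
    by rewrite /adjS mulr_sumr; apply: eq_bigr => j _; rewrite /xt; ring.
  have Hid : xt u / p u + @adjS R n e xt u = (1 + w u) *
    (K * ((deg e u)%:R * a / (w u * (1 + w u))) * x u 0 +
     K * ((deg e u)%:R * a / ((deg e u)%:R * (1 + w u))) * \sum_j (e u j)%:R * x j 0).
    rewrite hadj /xt /p; field.
    by rewrite !gt_eqF //; lra.
  rewrite Hid -{1}(mulr1 (1 + w u)); apply: ler_wpM2l => //; lra.
have core := core_main esym p_gt0 D_gt0 dg_le kap pairH xt0 Hxt.
have hsum : \sum_u xt u = a * K * \sum_u x u 0.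
  by rewrite mulr_sumr.
have hl : forall u, 1 / (betav e b lam u + (deg e u)%:R * gammav e b lam u) = (a * K)^-1 * p u.
  move=> u; rewrite hbeta hgamma /p.
  have [w0 _] := wP u; have hd := d0 u.
  have h1 : 0 < 1 + w u by lra.
  have h2 : 0 < K * ((deg e u)%:R * a) + (deg e u)%:R * (K * a) * w u.
    apply: addr_gt0; apply: mulr_gt0 => //; apply: mulr_gt0 => //; exact: mulr_gt0.
  field.
  by rewrite (gt_eqF hd) (gt_eqF K0) (gt_eqF a0) (gt_eqF h1) (gt_eqF w0) (gt_eqF h2).
rewrite (eq_bigr _ (fun u _ => hl u)) -mulr_sumr.
have aK : 0 < a * K by apply: mulr_gt0.
rewrite ler_pdivrMl // -hsum; exact: core.
Qed.
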